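(* Assume the setting below and suppose $\tau\le0$ and $|x_0^{(1)}|>a$. Let $r_0=\lceil\log_2(|x_0^{(1)}|/a)\rceil$. Then (with probability one) there is $j\le r_0$ such that $|x_j^{(1)}|<a$, and moreover $|x_k^{(1)}|<a$ for all $k\ge j$.
   Context: Let $n\ge2$, $a\ge\sqrt{n-1}$, $f(x)=a|x^{(1)}|+\sum_{i=2}^n x^{(i)}$ on $\mathbb{R}^n$ ($x^{(i)}$ the $i$-th coordinate), $0<c_1<c_2<1$, and $\tau=c_1+\frac{(n-1)(c_1-1)}{a^2}$. The initial point $x_0$ is drawn from the normal distribution on $\mathbb{R}^n$ (independently of $a$), and $x_{k+1}=x_k+t_kd_k$, $d_k=-\nabla f(x_k)$, where $t_k$ is returned by the following Armijo–Wolfe bracketing line search: set $\alpha=0$, $\beta=+\infty$, $t=1$; repeat: if $A(t)$ fails set $\beta\leftarrow t$; else if $W(t)$ fails set $\alpha\leftarrow t$; else stop and return $t$; then if $\beta<+\infty$ set $t\leftarrow(\alpha+\beta)/2$, otherwise $t\leftarrow2\alpha$. Here $A(t)$: $f(x_k+td_k)\le f(x_k)+c_1t\nabla f(x_k)^Td_k$, and $W(t)$: $f$ is differentiable at $x_k+td_k$ and $\nabla f(x_k+td_k)^Td_k\ge c_2\nabla f(x_k)^Td_k$. All statements are understood to hold with probability one. *)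

(* Defs.v *)
From HB Require Import structures.
From mathcomp Require Import all_boot all_order all_algebra.
From mathcomp Require Import all_classical all_reals all_analysis.
Set Implicit Arguments. Unset Strict Implicit. Unset Printing Implicit Defensive.
Import Order.TTheory GRing.Theory Num.Theory.
Import numFieldNormedType.Exports.
Local Open Scope classical_set_scope.
Local Open Scope ring_scope.

(* R^n is represented by row vectors 'rV[R]_n (a normed module, so that
   library differentiability 'differentiable' and differential ''d' apply). *)

(* The first coordinate x^(1) of x (index 0; for n >= 1 the sum has exactly one term). *)
Definition coord1 {R : realType} {n : nat} (x : 'rV[R]_n) : R :=
  \sum_(i < n | val i == 0%N) x 0 i.

Definition fa {R : realType} {n : nat} (a : R) (x : 'rV[R]_n) : R :=
  \sum_(i < n) (if val i == 0%N then a * `|x 0 i| else x 0 i).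

Definition grad {R : realType} {n : nat} (f : 'rV[R]_n -> R) (x : 'rV[R]_n)
  : 'rV[R]_n := \row_j ('d f x (delta_mx 0 j)).

(* Armijo condition A(t) at x along d, where grad f(x)^T d = 'd f x d *)
Definition armijo {R : realType} {n : nat} (f : 'rV[R]_n -> R) (c1 : R)
  (x d : 'rV[R]_n) (t : R) : Prop :=
  f (x + t *: d) <= f x + c1 * t * ('d f x d).

Definition wolfe {R : realType} {n : nat} (f : 'rV[R]_n -> R) (c2 : R)
  (x d : 'rV[R]_n) (t : R) : Prop :=
  differentiable f (x + t *: d) /\ 'd f (x + t *: d) d >= c2 * ('d f x d).

(* One iteration of the bracketing line search on a state (alpha, beta, t),
   beta = None meaning beta = +oo.  (Only used when the stopping test fails.) *)
Definition ls_next {R : realType} {n : nat} (f : 'rV[R]_n -> R) (c1 : R)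
  (x d : 'rV[R]_n) (s : R * option R * R) : R * option R * R :=
  let: (al, be, t) := s in
  let: (al', be') := if `[< armijo f c1 x d t >] then (t, be) else (al, Some t) in
  (al', be', match be' with Some b => (al' + b) / 2 | None => 2 * al' end).

Definition ls_state {R : realType} {n : nat} (f : 'rV[R]_n -> R) (c1 : R)
  (x d : 'rV[R]_n) (k : nat) : R * option R * R :=
  iter k (ls_next f c1 x d) (0, None, 1).

Definition ls_t {R : realType} {n : nat} (f : 'rV[R]_n -> R) (c1 : R)
  (x d : 'rV[R]_n) (k : nat) : R := (ls_state f c1 x d k).2.

Definition ls_returns {R : realType} {n : nat} (f : 'rV[R]_n -> R) (c1 c2 : R)
  (x d : 'rV[R]_n) (t : R) : Prop :=
  exists k : nat,
    [/\ ls_t f c1 x d k = t, armijo f c1 x d t, wolfe f c2 x d t &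
        forall j : nat, (j < k)%N ->
          ~ (armijo f c1 x d (ls_t f c1 x d j) /\ wolfe f c2 x d (ls_t f c1 x d j))].

Definition gd_iterates {R : realType} {n : nat} (f : 'rV[R]_n -> R) (c1 c2 : R)
  (x0 : 'rV[R]_n) (xs : nat -> 'rV[R]_n) : Prop :=
  xs 0%N = x0 /\
  forall k : nat, differentiable f (xs k) /\
    exists t : R, ls_returns f c1 c2 (xs k) (- grad f (xs k)) t /\
                  xs k.+1 = xs k + t *: (- grad f (xs k)).

(* Standard Gaussian measure on R^n (n-tuples) as iterated integral
   against the 1-d standard normal probability (Tonelli: equals the
   product measure on measurable sets). *)
Fixpoint gauss_int {R : realType} (n : nat) : (n.-tuple R -> \bar R) -> \bar R :=
  match n as m return (m.-tuple R -> \bar R) -> \bar R with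
  | 0%N => fun g => g [tuple]
  | m.+1 => fun g =>
      (\int[normal_prob (0:R) 1]_x gauss_int (fun t : m.-tuple R => g (cons_tuple x t)))%E
  end.

Definition gauss_null {R : realType} (n : nat) (N : set (n.-tuple R)) : Prop :=
  exists M : set (n.-tuple R),
    [/\ measurable M, N `<=` M & gauss_int (fun t => (\1_M t)%:E) = 0%E].

Definition row_of_tuple {R : realType} {n : nat} (t : n.-tuple R) : 'rV[R]_n :=
  \row_i tnth t i.

(* Main.v *)
Require Import Defs.
From HB Require Import structures.
From mathcomp Require Import all_boot all_order all_algebra.
From mathcomp Require Import all_classical all_reals all_analysis.
From mathcomp Require Import lra ring.
Import Order.TTheory GRing.Theory Num.Theory.
Import numFieldNormedType.Exports.
Local Open Scope classical_set_scope.
Local Open Scope ring_scope.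


Lemma gauss_int_cst (R : realType) (n : nat) (c : \bar R) :
  @gauss_int R n (fun _ => c) = c.
Proof.
elim: n => [//|n IH] /=.
rewrite IH integral_cst //= probability_setT mule1 //.
Qed.

Lemma gauss_null_first (R : realType) (n : nat) (C : set R) :
  countable C -> @gauss_null R n.+1 [set t | C (tnth t ord0)].
Proof.
move=> cC.
have mC : measurable C by apply: countable_measurable => // t; exact: measurable_set1.
exists [set t | C (tnth t ord0)]; split => //.
  have := @measurable_tnth _ R n.+1 ord0 measurableT C mC.
  by rewrite setTI.
rewrite /=.
transitivity (\int[normal_prob (0:R) 1]_x (\1_C x)%:E)%E.
  apply: eq_integral => x _.
  rewrite (_ : (fun t : n.-tuple R => _) = fun _ => (\1_C x)%:E).
    by rewrite gauss_int_cst.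
  by apply: funext => t; rewrite /indic /= /in_mem /=.
rewrite (@integral_indic _ _ R (normal_prob (0:R) 1) setT measurableT C mC) setIT.
have := (null_content_dominatesP _ _).1 (@normal_prob_dominates R 0 1).
move=> /(_ C mC); apply; exact: countable_lebesgue_measure0.
Qed.


Lemma near_eq_diff {R : realType} {V W : normedModType R} (f g : V -> W) x :
  (\forall y \near x, f y = g y) -> differentiable g x ->
  differentiable f x /\ ('d f x = 'd g x :> (V -> W)).
Proof.
move=> fg dg.
have fx : f x = g x := nbhs_singleton fg.
have key : f \o shift x = cst (f x) + 'd g x +o_ 0 id.
  apply/eqaddoP => e e0.
  have := (eqaddoP _ _ _ _).1 (diff_locally dg) e e0.
  move: fg; rewrite (near_shift 0 x) => fg.
  apply: filterS2 fg => z /=; rewrite subr0 fx => h; by rewrite !fctE /= h.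
have dfeq : 'd f x = 'd g x :> (V -> W) := diff_unique (diff_continuous dg) key.
split => //.
apply/diff_locallyP; rewrite dfeq; split => //; exact: diff_continuous.
Qed.

Definition Lin {R : realType} {n : nat} (c y : 'rV[R]_n) : R :=
  \sum_(j < n) c 0 j * y 0 j.

Lemma Lin_lin {R : realType} {n : nat} (c : 'rV[R]_n) :
  linear (Lin c : 'rV[R]_n -> R^o).
Proof.
move=> k u v; rewrite /Lin scaler_sumr -big_split /=; apply: eq_bigr => j _.
by rewrite !mxE mulrDr mulrCA.
Qed.

Lemma Lin_cont {R : realType} {n : nat} (c : 'rV[R]_n) :
  continuous (Lin c).
Proof.
have H : forall s : seq 'I_n,
    continuous (fun y : 'rV[R]_n => \sum_(j <- s) c 0 j * y 0 j).
  elim => [|j s IH] z.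
    rewrite (_ : (fun _ => _) = cst 0); first exact: cst_continuous.
    by apply: funext => ?; rewrite big_nil.
  rewrite (_ : (fun _ => _) = (fun y : 'rV[R]_n => c 0 j * y 0 j) +
      (fun y : 'rV[R]_n => \sum_(j <- s) c 0 j * y 0 j)); last first.
    by apply: funext => ?; rewrite big_cons.
  apply: continuousD; last exact: IH.
  apply: continuousM; first exact: cst_continuous.
  exact: coord_continuous.
exact: H.
Qed.

Lemma Lin_diff {R : realType} {n : nat} (c x : 'rV[R]_n) :
  differentiable (Lin c) x /\ ('d (Lin c) x = Lin c :> ('rV[R]_n -> R)).
Proof.
pose lM := GRing.isLinear.Build _ _ _ _ _ (Lin_lin c).
pose L : {linear 'rV[R]_n -> R^o} := HB.pack (Lin c : 'rV[R]_n -> R^o) lM.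
have -> : Lin c = L by [].
split.
  exact/linear_differentiable/Lin_cont.
exact/diff_lin/Lin_cont.
Qed.


Definition cvec {R : realType} {m : nat} (a s : R) : 'rV[R]_m.+1 :=
  \row_j (if j == ord0 then a * s else 1).

Definition Ssum {R : realType} {m : nat} (y : 'rV[R]_m.+1) : R :=
  \sum_(i < m) y 0 (lift ord0 i).

Lemma fa_split {R : realType} {m : nat} (a : R) (y : 'rV[R]_m.+1) :
  fa a y = a * `|y 0 ord0| + Ssum y.
Proof. by rewrite /fa big_ord_recl /=. Qed.

Lemma coord1E {R : realType} {m : nat} (y : 'rV[R]_m.+1) : coord1 y = y 0 ord0.
Proof.
rewrite /coord1 big_mkcond big_ord_recl /= big1 ?addr0 //.
Qed.

Lemma Lin_cvec {R : realType} {m : nat} (a s : R) (y : 'rV[R]_m.+1) :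
  Lin (cvec a s) y = a * s * y 0 ord0 + Ssum y.
Proof.
rewrite /Lin big_ord_recl !mxE eqxx; congr (_ + _).
by apply: eq_bigr => i _; rewrite !mxE /= mul1r.
Qed.

Lemma fa_near {R : realType} {m : nat} (a : R) (x : 'rV[R]_m.+1) :
  x 0 ord0 != 0 ->
  \forall y \near x, fa a y = Lin (cvec a (Num.sg (x 0 ord0))) y.
Proof.
move=> x0.
have hx : 0 < `|x 0 ord0| by rewrite normr_gt0.
have := @cvgr_dist_lt _ _ _ (nbhs x) (nbhs_filter x) _ _ (@coord_continuous _ _ _ 0 ord0 x) _ hx.
apply: filterS => y /= /ltr_normlP [h1 h2].
rewrite fa_split Lin_cvec -!mulrA; congr (_ * _ + _).
have [xp|xn|xe] := ltgtP (x 0 ord0) 0.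
- rewrite ltr0_sg // ltr0_norm // in h1 h2 *.
  rewrite ltr0_norm; [lra|lra].
- rewrite gtr0_sg // gtr0_norm // in h1 h2 *.
  rewrite gtr0_norm; [lra|lra].
- by move: x0; rewrite xe eqxx.
Qed.

Lemma fa_diff {R : realType} {m : nat} (a : R) (x : 'rV[R]_m.+1) :
  x 0 ord0 != 0 ->
  differentiable (fa a) x /\
  ('d (fa a) x = Lin (cvec a (Num.sg (x 0 ord0))) :> ('rV[R]_m.+1 -> R)).
Proof.
move=> x0; have [d1 d2] := Lin_diff (cvec a (Num.sg (x 0 ord0))) x.
have [e1 e2] := near_eq_diff _ _ _ (fa_near a x x0) d1.
by split => //; rewrite e2 d2.
Qed.

Lemma grad_fa {R : realType} {m : nat} (a : R) (x : 'rV[R]_m.+1) :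
  x 0 ord0 != 0 -> grad (fa a) x = cvec a (Num.sg (x 0 ord0)).
Proof.
move=> x0; have [_ e] := fa_diff a x x0.
apply/rowP => j; rewrite /grad mxE e /Lin (bigD1 j) //= !mxE !eqxx mulr1.
rewrite big1 ?addr0 // => k /negbTE kj; rewrite !mxE kj mulr0 //.
Qed.

Lemma Ssum_const {R : realType} {m : nat} (a s : R) :
  Ssum (cvec a s : 'rV[R]_m.+1) = m%:R.
Proof.
rewrite /Ssum (eq_bigr (fun _ => 1)) ?sumr_const ?card_ord //.
by move=> i _; rewrite mxE.
Qed.

Lemma Ssum_line {R : realType} {m : nat} (x : 'rV[R]_m.+1) (a s t : R) :
  Ssum (x + t *: - cvec a s) = Ssum x - t * m%:R.
Proof.
rewrite -(Ssum_const a s) /Ssum mulr_sumr -sumrB; apply: eq_bigr => i _.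
by rewrite !mxE /= mulrN.
Qed.

Lemma line0 {R : realType} {m : nat} (x : 'rV[R]_m.+1) (a s t : R) :
  (x + t *: - cvec a s) 0 ord0 = x 0 ord0 - t * (a * s).
Proof. by rewrite !mxE eqxx mulrN. Qed.

Lemma Ssum_opp {R : realType} {m : nat} (a s : R) :
  Ssum (- cvec a s : 'rV[R]_m.+1) = - m%:R.
Proof.
rewrite /Ssum (eq_bigr (fun _ => -1)) ?sumrN ?sumr_const ?card_ord //.
by move=> i _; rewrite !mxE.
Qed.

Lemma dfa_dir {R : realType} {m : nat} (a : R) (x y : 'rV[R]_m.+1) :
  y 0 ord0 != 0 ->
  'd (fa a) y (- grad (fa a) x) =
  a * Num.sg (y 0 ord0) * (- (grad (fa a) x) 0 ord0) + Ssum (- grad (fa a) x).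
Proof.
move=> y0; have [_ e] := fa_diff a y y0; rewrite e Lin_cvec.
by rewrite mxE.
Qed.

Lemma cvec0 {R : realType} {m : nat} (a s : R) : (cvec a s : 'rV[R]_m.+1) 0 ord0 = a * s.
Proof. by rewrite mxE eqxx. Qed.

Lemma armijoE {R : realType} {m : nat} (a c1 t : R) (x : 'rV[R]_m.+1) :
  x 0 ord0 != 0 ->
  armijo (fa a) c1 x (- grad (fa a) x) t <->
  a * `|x 0 ord0 - t * (a * Num.sg (x 0 ord0))| + Ssum x - t * m%:R <=
  a * `|x 0 ord0| + Ssum x + c1 * t * (a * Num.sg (x 0 ord0) * (- (a * Num.sg (x 0 ord0))) - m%:R).
Proof.
move=> x0; rewrite /armijo (dfa_dir a x x x0) (grad_fa a x x0) !fa_split line0.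
by rewrite Ssum_line Ssum_opp cvec0 addrA.
Qed.


Lemma wolfeE {R : realType} {m : nat} (a c2 t : R) (x : 'rV[R]_m.+1) :
  x 0 ord0 != 0 -> x 0 ord0 - t * (a * Num.sg (x 0 ord0)) != 0 ->
  wolfe (fa a) c2 x (- grad (fa a) x) t <->
  c2 * (a * Num.sg (x 0 ord0) * (- (a * Num.sg (x 0 ord0))) - m%:R) <=
  a * Num.sg (x 0 ord0 - t * (a * Num.sg (x 0 ord0))) * (- (a * Num.sg (x 0 ord0))) - m%:R.
Proof.
move=> x0 y0.
rewrite /wolfe; set y := (_ + _ *: _).
have ey : y 0 ord0 = x 0 ord0 - t * (a * Num.sg (x 0 ord0)).
  rewrite /y (grad_fa a x x0) line0; reflexivity.
have y0' : y 0 ord0 != 0 by rewrite ey.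
have dy := (fa_diff a y y0').1.
have E1 := dfa_dir a x x x0.
have E := dfa_dir a x y y0'.
rewrite [X in _ <= X]E [X in c2 * X]E1 ey (grad_fa a x x0) Ssum_opp cvec0.
split; first by case.
by move=> h; split.
Qed.


Lemma ls_facts {R : realType} {m : nat} (a c1 c2 : R) (x : 'rV[R]_m.+1) :
  0 < a -> m%:R <= a ^+ 2 -> 0 < c1 -> c1 < c2 -> c2 < 1 ->
  c1 * (a ^+ 2 + m%:R) <= m%:R ->
  x 0 ord0 != 0 ->
  [/\ forall t, 0 <= t -> t != `|x 0 ord0| / a ->
        (wolfe (fa a) c2 x (- grad (fa a) x) t <-> `|x 0 ord0| / a < t),
      forall t, 0 <= t -> t < `|x 0 ord0| / a -> armijo (fa a) c1 x (- grad (fa a) x) t &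
      forall t, `|x 0 ord0| / a < t -> t <= 2 * (`|x 0 ord0| / a) ->
        armijo (fa a) c1 x (- grad (fa a) x) t].
Proof.
move=> a0 ma c10 c12 c21 tau x0.
set v := `|x 0 ord0| / a.
set s := Num.sg (x 0 ord0).
have v0 : 0 < v by rewrite divr_gt0 // normr_gt0.
have nu : `|x 0 ord0| = a * v by rewrite /v mulrC divfK ?gt_eqF.
have ss : s * s = 1.
  rewrite -sgrM gtr0_sg // lt_def mulf_eq0 negb_or x0 /=.
  by rewrite -expr2 sqr_ge0.
have us : x 0 ord0 = s * (a * v) by rewrite -nu mulr_sg_norm.
have ey t : x 0 ord0 - t * (a * s) = s * (a * (v - t)).
  by rewrite us; ring.
have ny t : `|x 0 ord0 - t * (a * s)| = a * `|v - t|.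
  by rewrite ey normrM normrM normr_sg x0 mul1r gtr0_norm.
have Ga : 0 < a ^+ 2 + m%:R by apply: ltr_wpDr => //; exact: exprn_gt0.
split.
- move=> t t0 tv.
  have yn : x 0 ord0 - t * (a * s) != 0.
    rewrite ey mulf_neq0 ?mulf_neq0 ?(gt_eqF a0) //.
      by rewrite /s sgr_eq0.
    by rewrite subr_eq0 eq_sym.
  have sgs : Num.sg s = s by rewrite /s sgr_id.
  rewrite (wolfeE a c2 t x x0 yn) -/s ey sgrM sgrM (gtr0_sg a0) mul1r sgs.
  have -> : a * (s * Num.sg (v - t)) * - (a * s) = - (a ^+ 2 * Num.sg (v - t)).
    by rewrite -[RHS]mul1r -ss; ring.
  have -> : a * s * - (a * s) = - a ^+ 2.
    by rewrite -[RHS]mul1r -ss; ring.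
  have [vt|tv'] := ltrP v t.
    rewrite (ltr0_sg (_ : v - t < 0)) ?subr_lt0 //; split => // _.
    have : 0 <= c2 * (a ^+ 2 + m%:R) by rewrite mulr_ge0 // ?ltW // (lt_trans c10).
    lra.
  have tv2 : t < v by rewrite lt_neqAle tv' andbT.
  rewrite (gtr0_sg (_ : 0 < v - t)) ?subr_gt0 //; split => // h.
  have : c2 * (a ^+ 2 + m%:R) < a ^+ 2 + m%:R by rewrite gtr_pMl.
  lra.
- move=> t t0 tv; apply/(armijoE a c1 t x x0); rewrite -/s ny nu.
  rewrite ger0_norm; last by rewrite subr_ge0 ltW.
  have -> : a * s * - (a * s) = - a ^+ 2.
    by rewrite -[RHS]mul1r -ss; ring.
  have h : 0 <= t * (a ^+ 2 + m%:R) by rewrite mulr_ge0 // ltW.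
  have h2 : c1 * (t * (a ^+ 2 + m%:R)) <= t * (a ^+ 2 + m%:R).
    by rewrite ler_piMl // ltW // (lt_trans c12).
  rewrite !expr2 in h h2 *; nra.
- move=> t vt t2; apply/(armijoE a c1 t x x0); rewrite -/s ny nu.
  rewrite ler0_norm; last by rewrite subr_le0 ltW.
  have -> : a * s * - (a * s) = - a ^+ 2.
    by rewrite -[RHS]mul1r -ss; ring.
  have t0 : 0 <= t by rewrite ltW // (lt_trans v0).
  have h1 : t * (c1 * (a ^+ 2 + m%:R)) <= t * m%:R by rewrite ler_wpM2l.
  have h2 : a ^+ 2 * t <= a ^+ 2 * (2 * v) by rewrite ler_wpM2l // sqr_ge0.
  rewrite !expr2 in h1 h2 *; nra.
Qed.


Definition Dy {R : realType} (q : R) := exists (z : int) (k : nat), q = z%:~R / 2 ^+ k.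

Lemma Dy_int {R : realType} (z : int) : Dy (z%:~R : R).
Proof. by exists z, 0%N; rewrite expr0 divr1. Qed.

Lemma Dy0 {R : realType} : Dy (0 : R).
Proof. by have := @Dy_int R 0; rewrite mulr0z. Qed.

Lemma Dy1 {R : realType} : Dy (1 : R).
Proof. by have := @Dy_int R 1. Qed.

Lemma DyD {R : realType} (p q : R) : Dy p -> Dy q -> Dy (p + q).
Proof.
move=> [z1 [k1 ->]] [z2 [k2 ->]].
exists (z1 * 2 ^+ k2 + z2 * 2 ^+ k1), (k1 + k2)%N.
have h1 : (2 : R) ^+ k1 != 0 by rewrite expf_neq0 // pnatr_eq0.
have h2 : (2 : R) ^+ k2 != 0 by rewrite expf_neq0 // pnatr_eq0.
rewrite intrD !intrM !rmorphXn /= exprD.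
field; rewrite h1 h2 //.
Qed.

Lemma DyN {R : realType} (p : R) : Dy p -> Dy (- p).
Proof. by move=> [z [k ->]]; exists (- z), k; rewrite intrN mulNr. Qed.

Lemma DyH {R : realType} (p : R) : Dy p -> Dy (p / 2).
Proof.
move=> [z [k ->]]; exists z, k.+1; rewrite exprS.
have h1 : (2 : R) ^+ k != 0 by rewrite expf_neq0 // pnatr_eq0.
field; rewrite h1 //.
Qed.

Lemma DyM2 {R : realType} (p : R) : Dy p -> Dy (2 * p).
Proof.
move=> dp; have -> : 2 * p = p + p by ring.
exact: DyD.
Qed.

Lemma ls_stateS {R : realType} {n : nat} (f : 'rV[R]_n -> R) c1 x d i :
  ls_state f c1 x d i.+1 = ls_next f c1 x d (ls_state f c1 x d i).
Proof. by []. Qed.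

Lemma ls_inv {R : realType} {n : nat} (f : 'rV[R]_n -> R) c1 x d i :
  let: (al, be, t) := ls_state f c1 x d i in
  [/\ Dy al, Dy t, (forall b, be = Some b -> Dy b /\ t < b), 0 <= al & al < t].
Proof.
elim: i => [|i IH].
  by rewrite /ls_state /=; split => //; [exact: Dy0 | exact: Dy1].
rewrite ls_stateS; move: IH; case: (ls_state f c1 x d i) => [[al be] t].
move=> [Dal Dt Hb al0 alt]; rewrite /ls_next.
case: asboolP => HA /=.
- case: be Hb => [b|] Hb /=.
  + have [Db tb] := Hb b erefl.
    split => //.
    * by apply: DyH; apply: DyD.
    * move=> b' [<-]; split => //; lra.
    * lra.
    * lra.
  + split => //.
    * by apply: DyM2.
    * lra.
    * lra.
- split => //.
  + by apply: DyH; apply: DyD.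
  + move=> b' [<-]; split => //; lra.
  + lra.
Qed.


Definition LSH {R : realType} {n : nat} (f : 'rV[R]_n -> R) (c1 c2 : R)
  (x d : 'rV[R]_n) (v : R) : Prop :=
  [/\ 0 < v,
      forall t, 0 <= t -> t != v -> (wolfe f c2 x d t <-> v < t),
      forall t, 0 <= t -> t < v -> armijo f c1 x d t,
      forall t, v < t -> t <= 2 * v -> armijo f c1 x d t &
      forall t, Dy t -> t != v].

Lemma ls_t_prop {R : realType} {n : nat} (f : 'rV[R]_n -> R) c1 x d i :
  Dy (ls_t f c1 x d i) /\ 0 < ls_t f c1 x d i.
Proof.
have := ls_inv f c1 x d i; rewrite /ls_t.
case: (ls_state f c1 x d i) => [[al be] t] [_ Dt _ al0 alt] /=.
split => //; lra.
Qed.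

Lemma ls_big {R : realType} {n : nat} (f : 'rV[R]_n -> R) c1 c2 x d v k :
  LSH f c1 c2 x d v -> 2 ^+ k < v -> v < 2 ^+ k.+1 ->
  ls_returns f c1 c2 x d (2 ^+ k.+1) /\
  (forall t, ls_returns f c1 c2 x d t -> t = 2 ^+ k.+1).
Proof.
move=> [v0 HW HA1 HA2 Hnd] vk kv.
have pw : forall i, (i <= k.+1)%N ->
    (ls_state f c1 x d i).1.2 = None /\ ls_t f c1 x d i = 2 ^+ i.
  elim => [|i IH] ik; first by [].
  have [e1 e2] := IH (ltnW ik).
  rewrite /ls_t ls_stateS; move: e1 e2; rewrite /ls_t.
  case: (ls_state f c1 x d i) => [[al be] t] /= -> ->.
  rewrite /ls_next.
  have lt : (2 : R) ^+ i < v.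
    apply: le_lt_trans vk; rewrite ler_eXn2l //; lra.
  case: asboolP => HA /=; last first.
    by exfalso; apply: HA; apply: HA1 => //; exact: exprn_ge0.
  by rewrite exprS.
have W t : wolfe f c2 x d t -> v < t \/ ~ (0 <= t /\ Dy t).
  move=> w; case: (pselect (0 <= t /\ Dy t)) => [[t0 Dt]|]; last by right.
  by left; apply/(HW t t0 (Hnd t Dt)).
have st : armijo f c1 x d (2 ^+ k.+1) /\ wolfe f c2 x d (2 ^+ k.+1).
  have Dk : Dy ((2 : R) ^+ k.+1) by have := ls_t_prop f c1 x d k.+1; rewrite (pw k.+1 (leqnn _)).2 => -[].
  split.
    by apply: HA2 => //; rewrite exprS; lra.
  apply/(HW _ _ (Hnd _ Dk)) => //; exact: exprn_ge0.
have nst j : (j < k.+1)%N -> ~ (armijo f c1 x d (ls_t f c1 x d j) /\ wolfe f c2 x d (ls_t f c1 x d j)).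
  move=> jk [_ w].
  have [Dj j0] := ls_t_prop f c1 x d j.
  have := (HW _ (ltW j0) (Hnd _ Dj)).1 w.
  rewrite (pw j (ltnW jk)).2.
  have : (2 : R) ^+ j <= 2 ^+ k by rewrite ler_eXn2l //; lra.
  lra.
split.
  exists k.+1; split; [exact: (pw k.+1 (leqnn _)).2 | exact: st.1 | exact: st.2 | exact: nst].
move=> t [kk [e A Wo H]].
have [lt|gt|eq] := ltngtP kk k.+1.
- exfalso; apply: (nst kk lt); rewrite e; exact: (conj A Wo).
- exfalso; apply: (H k.+1 gt); rewrite (pw k.+1 (leqnn _)).2; exact: st.
- rewrite -e eq; exact: (pw k.+1 (leqnn _)).2.
Qed.

Definition lstop {R : realType} {n : nat} (f : 'rV[R]_n -> R) (c1 c2 : R)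
  (x d : 'rV[R]_n) (j : nat) : Prop :=
  armijo f c1 x d (ls_t f c1 x d j) /\ wolfe f c2 x d (ls_t f c1 x d j).

Lemma ls_small_inv {R : realType} {n : nat} (f : 'rV[R]_n -> R) c1 c2 x d v :
  LSH f c1 c2 x d v -> v < 1 -> forall i,
  (forall j, (j <= i)%N -> ~ lstop f c1 c2 x d j) ->
  let: (al, be, t) := ls_state f c1 x d i.+1 in
  exists b, [/\ be = Some b, t = (al + b) / 2, 0 <= al < v, 2 * v < b <= 1 &
                (b - al) * 2 ^+ i = 1].
Proof.
move=> [v0 HW HA1 HA2 Hnd] v1.
have two0 : (2:R) != 0 by rewrite pnatr_eq0.
elim => [|i IH] ns.
  have w1 : wolfe f c2 x d 1 by apply/(HW 1 ler01 (Hnd 1 Dy1)).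
  have na1 : ~ armijo f c1 x d 1.
    move=> a1; apply: (ns 0%N (leqnn _)); rewrite /lstop /ls_t /=; exact: (conj a1 w1).
  rewrite ls_stateS /= /ls_next /=.
  case: asboolP => HA /=; first by exfalso; apply: na1.
  exists 1; split => //.
  - apply/andP; split; [exact: lexx | exact: v0].
  - apply/andP; split; last exact: lexx.
    rewrite ltNge; apply/negP => h; apply: na1; apply: HA2 => //.
  - by rewrite expr0 subr0 mulr1.
have IHr := IH (fun j jl => ns j (leqW jl)).
have [Dt t0] := ls_t_prop f c1 x d i.+1.
have nsi : ~ lstop f c1 c2 x d i.+1 by apply: ns.
rewrite [ls_state f c1 x d i.+2]ls_stateS; move: IHr Dt t0 nsi; rewrite /lstop /ls_t.
case: (ls_state f c1 x d i.+1) => [[al be] t] /= IHr Dt t0 nsi.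
move: IHr => [b [-> et /andP[al0 alv] /andP[vb b1] e2]].
rewrite /ls_next.
have [tv|vt] := boolP (t < v).
  have At : armijo f c1 x d t by apply: HA1 => //; exact: ltW.
  case: asboolP => HA /=; last by exfalso; apply: HA.
  exists b; split => //.
  - apply/andP; split; [exact: ltW | exact: tv].
  - apply/andP; split; [exact: vb | exact: b1].
  - rewrite -[X in _ = X]e2 exprS et; field; rewrite ?two0 //.
have vt' : v < t.
  rewrite lt_def (Hnd t Dt) /= leNgt; exact: vt.
have Wt : wolfe f c2 x d t by apply/(HW t (ltW t0) (Hnd t Dt)).
case: asboolP => HA /=.
  by exfalso; apply: nsi; exact: (conj HA Wt).
exists t; split => //.
- apply/andP; split; [exact: al0 | exact: alv].
- apply/andP; split.
    rewrite ltNge; apply/negP => h; apply: HA; apply: HA2 => //.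
  rewrite et; lra.
- rewrite -[X in _ = X]e2 exprS et; field; rewrite ?two0 //.
Qed.

Lemma ls_small {R : realType} {n : nat} (f : 'rV[R]_n -> R) c1 c2 x d v :
  LSH f c1 c2 x d v -> v < 1 ->
  (exists t, ls_returns f c1 c2 x d t) /\
  (forall t, ls_returns f c1 c2 x d t -> v < t <= 1).
Proof.
move=> H v1; have H' := H; case: H' => v0 HW HA1 HA2 Hnd.
have inv := @ls_small_inv R n f c1 c2 x d v H v1.
split.
  have ex : exists j, `[< lstop f c1 c2 x d j >].
    apply/not_existsP => nex.
    have ns j : ~ lstop f c1 c2 x d j by move=> s; apply: (nex j); apply/asboolP.
    have iv0 : 0 <= v^-1 by rewrite invr_ge0 ltW.
    set K := Num.Def.archi_bound (v^-1).
    have hK : v^-1 < K%:R := archi_boundP iv0.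
    have hK2 : (K < 2 ^ K)%N by apply: ltn_expl.
    have hK3 : v^-1 < 2 ^+ K.
      apply: lt_trans hK _; rewrite -natrX ltr_nat; exact: hK2.
    have := inv K (fun j _ => ns j).
    case: (ls_state f c1 x d K.+1) => [[al be] t] [b [_ _ /andP[al0 alv] /andP[vb b1] e2]].
    have hv : 1 < v * 2 ^+ K.
      have e : v * v^-1 = 1 := mulfV (lt0r_neq0 v0).
      have : v * v^-1 < v * 2 ^+ K by rewrite ltr_pM2l.
      by rewrite e.
    have p0 : 0 < (2:R) ^+ K by apply: exprn_gt0.
    have : v * 2 ^+ K < (b - al) * 2 ^+ K by rewrite ltr_pM2r //; lra.
    lra.
  case: (ex_minnP ex) => j /asboolP sj minj.
  exists (ls_t f c1 x d j), j; split => //; [exact: sj.1 | exact: sj.2 |].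
  move=> i ij si; have := minj i (asboolT si); rewrite leqNgt ij //.
move=> t [kk [e A Wo Hk]].
have [Dt t0] := ls_t_prop f c1 x d kk; rewrite e in Dt t0.
have vt : v < t by apply/(HW t (ltW t0) (Hnd t Dt)).
apply/andP; split; first exact: vt.
case: kk e Hk => [|i] e Hk.
  by rewrite -e /ls_t /=.
have := inv i (fun j ji => Hk j ji).
move: e; rewrite /ls_t.
case: (ls_state f c1 x d i.+1) => [[al be] t'] /= -> [b [_ -> /andP[al0 alv] /andP[vb b1] _]].
lra.
Qed.


Definition ND {R : realType} (a u : R) := forall q, Dy q -> u != a * q.

Lemma Dy_pow {R : realType} (p : nat) : Dy ((2 : R) ^+ p).
Proof. by have := @Dy_int R (2 ^+ p); rewrite rmorphXn. Qed.

Lemma sg_cases {R : realType} (u : R) : u != 0 -> Num.sg u = 1 \/ Num.sg u = -1.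
Proof.
move=> u0; case: (ltgtP u 0) => [h|h|h].
- by right; rewrite ltr0_sg.
- by left; rewrite gtr0_sg.
- by move: u0; rewrite h eqxx.
Qed.

Lemma DyMsg {R : realType} (u q : R) : u != 0 -> Dy q -> Dy (Num.sg u * q).
Proof.
move=> u0 dq; case: (sg_cases _ u0) => ->; first by rewrite mul1r.
by rewrite mulN1r; apply: DyN.
Qed.

Lemma ND_v {R : realType} (a u : R) : 0 < a -> ND a u -> forall q, Dy q -> q != `|u| / a.
Proof.
move=> a0 nd q dq; apply/negP => /eqP e.
have u0 : u != 0 by have := nd 0 Dy0; rewrite mulr0.
have := nd (Num.sg u * q) (DyMsg _ _ u0 dq).
have E : a * (Num.sg u * (`|u| / a)) = Num.sg u * `|u|.
  by field; rewrite gt_eqF.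
by rewrite e E mulr_sg_norm eqxx.
Qed.

Lemma level {R : realType} (a u v : R) : 0 < a -> ND a u -> v = `|u| / a -> 1 < v ->
  exists k, 2 ^+ k < v < 2 ^+ k.+1.
Proof.
move=> a0 nd ev v1.
have v0 : 0 <= v by lra.
have ex : exists p, v < 2 ^+ p.
  exists (Num.Def.archi_bound v); apply: lt_trans (archi_boundP v0) _.
  by rewrite -natrX ltr_nat ltn_expl.
have exb : exists p, `[< v < 2 ^+ p >] by case: ex => p hp; exists p; apply/asboolP.
case: (ex_minnP exb) => p /asboolP hp minp.
case: p hp minp => [|k] hp minp; first by rewrite expr0 in hp; lra.
exists k; apply/andP; split => //.
rewrite lt_def; apply/andP; split.
  by rewrite ev eq_sym; apply: ND_v => //; exact: Dy_pow.
rewrite leNgt; apply/negP => h.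
by have := minp k (asboolT h); rewrite ltnn.
Qed.

Definition Hyp {R : realType} (m : nat) (a c1 c2 : R) :=
  0 < a /\ m%:R <= a ^+ 2 /\ 0 < c1 /\ c1 < c2 /\ c2 < 1 /\ c1 * (a ^+ 2 + m%:R) <= m%:R.

Lemma ny_lemma {R : realType} (a u t : R) : 0 < a -> u != 0 ->
  `|u - t * (a * Num.sg u)| / a = Num.norm (`|u| / a - t).
Proof.
move=> a0 u0.
have -> : u - t * (a * Num.sg u) = Num.sg u * (a * (`|u| / a - t)).
  by rewrite -{1}(mulr_sg_norm u); field; rewrite gt_eqF.
rewrite normrM normrM normr_sg u0 mul1r (gtr0_norm a0).
by field; rewrite gt_eqF.
Qed.

Lemma LSH_of {R : realType} {m : nat} (a c1 c2 : R) (x : 'rV[R]_m.+1) :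
  Hyp m a c1 c2 -> ND a (x 0 ord0) ->
  LSH (fa a) c1 c2 x (- grad (fa a) x) (`|x 0 ord0| / a).
Proof.
move=> [a0 [ma [c10 [c12 [c21 tau]]]]] nd.
have u0 : x 0 ord0 != 0 by have := nd 0 Dy0; rewrite mulr0.
have [HW HA1 HA2] := ls_facts a c1 c2 x a0 ma c10 c12 c21 tau u0.
split => //.
- by rewrite divr_gt0 // normr_gt0.
- by move=> t dt; apply: ND_v.
Qed.

Lemma step_lemma {R : realType} {m : nat} (a c1 c2 : R) (x : 'rV[R]_m.+1) :
  Hyp m a c1 c2 -> ND a (x 0 ord0) ->
  [/\ differentiable (fa a) x,
      exists t, ls_returns (fa a) c1 c2 x (- grad (fa a) x) t &
      forall t, ls_returns (fa a) c1 c2 x (- grad (fa a) x) t ->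
        [/\ ND a ((x + t *: - grad (fa a) x) 0 ord0),
            `|x 0 ord0| / a < 1 -> `|(x + t *: - grad (fa a) x) 0 ord0| / a < 1 &
            forall k, 2 ^+ k < `|x 0 ord0| / a < 2 ^+ k.+1 ->
              `|(x + t *: - grad (fa a) x) 0 ord0| / a < 2 ^+ k /\
              `|(x + t *: - grad (fa a) x) 0 ord0| / a < `|x 0 ord0| / a]].
Proof.
move=> H nd.
have H' := H; case: H' => [a0 _].
have u0 : x 0 ord0 != 0 by have := nd 0 Dy0; rewrite mulr0.
have L := LSH_of a c1 c2 x H nd.
set v := `|x 0 ord0| / a in L *.
have [v0 _ _ _ _] := L.
have e1 t : (x + t *: - grad (fa a) x) 0 ord0 = x 0 ord0 - t * (a * Num.sg (x 0 ord0)).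
  by rewrite (grad_fa a x u0) line0.
have e2 t : `|(x + t *: - grad (fa a) x) 0 ord0| / a = `|v - t|.
  by rewrite e1 ny_lemma.
have v1 : v != 1 by rewrite eq_sym; apply: ND_v => //; exact: Dy1.
split.
- exact: (fa_diff a x u0).1.
- have [vl|vg] := boolP (v < 1).
    exact: (@ls_small _ _ _ _ _ _ _ _ L vl).1.
  have vg' : 1 < v by rewrite lt_def v1 /= leNgt.
  have [k /andP[k1 k2]] := level a (x 0 ord0) v a0 nd erefl vg'.
  by exists (2 ^+ k.+1); exact: (@ls_big _ _ _ _ _ _ _ _ k L k1 k2).1.
move=> t ret; split.
- move=> q dq; rewrite e1; apply/negP => /eqP e.
  have [kk [ekk _ _ _]] := ret.
  have [Dt _] := ls_t_prop (fa a) c1 x (- grad (fa a) x) kk; rewrite ekk in Dt.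
  have : x 0 ord0 = a * (q + Num.sg (x 0 ord0) * t).
    by rewrite mulrDr -e; ring.
  move=> ex; move: (nd _ (DyD _ _ dq (DyMsg _ _ u0 Dt))); rewrite -ex eqxx //.
- move=> vl; rewrite e2.
  have /andP[vt t1] := (@ls_small _ _ _ _ _ _ _ _ L vl).2 t ret.
  rewrite ltr0_norm ?subr_lt0 //; lra.
- move=> k /andP[k1 k2]; rewrite e2.
  have -> := (@ls_big _ _ _ _ _ _ _ _ k L k1 k2).2 t ret.
  rewrite ltr0_norm ?subr_lt0 // exprS; lra.
Qed.


Theorem theorem3 (R : realType) (n : nat) (a c1 c2 : R) :
  (2 <= n)%N ->
  Num.sqrt (n.-1)%:R <= a ->
  0 < c1 -> c1 < c2 -> c2 < 1 ->
  c1 + (n.-1)%:R * (c1 - 1) / a ^+ 2 <= 0 ->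
  gauss_null
    [set t : n.-tuple R |
      a < `|coord1 (row_of_tuple t)| /\
      ~ (exists xs : nat -> 'rV[R]_n,
           gd_iterates (fa a) c1 c2 (row_of_tuple t) xs /\
           exists j : nat,
             [/\ (j%:Z <= Num.ceil (ln (`|coord1 (row_of_tuple t)| / a) / ln 2))%R,
                 `|coord1 (xs j)| < a &
                 forall k : nat, (j <= k)%N -> `|coord1 (xs k)| < a])].
Proof.
move=> n2 sa c10 c12 c21 tau.
case: n n2 sa tau => [|m] // n2 sa tau.
rewrite /= in sa tau.
have m0 : (0 < m)%N by [].
have sm0 : 0 < Num.sqrt (m%:R : R) by rewrite sqrtr_gt0 ltr0n.
have a0 : 0 < a by apply: lt_le_trans sm0 sa.
have ma : m%:R <= a ^+ 2.
  rewrite -(@sqr_sqrtr _ (m%:R : R)) ?ler0n //.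
  by rewrite lerXn2r // ?nnegrE ?ltW.
have a2 : 0 < a ^+ 2 by apply: exprn_gt0.
have tau' : c1 * (a ^+ 2 + m%:R) <= m%:R.
  have : (c1 + m%:R * (c1 - 1) / a ^+ 2) * a ^+ 2 <= 0.
    by rewrite pmulr_lle0.
  have -> : (c1 + m%:R * (c1 - 1) / a ^+ 2) * a ^+ 2 = c1 * (a ^+ 2 + m%:R) - m%:R.
    by field; rewrite gt_eqF.
  lra.
have H : Hyp m a c1 c2 by split.
pose C := [set u : R | exists z : int, exists k : nat, u = a * (z%:~R / 2 ^+ k)].
have cC : countable C.
  have -> : C = (fun p : int * nat => a * (p.1%:~R / 2 ^+ p.2)) @` setT.
    apply/seteqP; split => u.
      by move=> [z [k ->]]; exists (z, k).
    by move=> [[z k] _ <-]; exists z, k.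
  exact: (card_le_trans (card_image_le _ _) (countableP _)).
have [M [mM sub0 g0]] := gauss_null_first R m C cC.
exists M; split => //.
move=> t /= [ha hn]; apply: sub0 => /=.
apply: contrapT => nC; apply: hn.
set x0 := row_of_tuple t.
have ex0 : x0 0 ord0 = tnth t ord0 by rewrite mxE.
rewrite coord1E ex0 in ha *.
have nd0 : ND a (x0 0 ord0).
  move=> q [z [k ->]]; apply/eqP => e; apply: nC; rewrite -ex0 e.
  by exists z, k.
pose tsel (x : 'rV[R]_m.+1) :=
  xget 0 [set s | ls_returns (fa a) c1 c2 x (- grad (fa a) x) s].
pose step (x : 'rV[R]_m.+1) := x + tsel x *: - grad (fa a) x.
pose xs k := iter k step x0.
have xsS k : xs k.+1 = step (xs k) by [].
have ndk : forall k, ND a (xs k 0 ord0).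
  elim => [|k IH]; first exact: nd0.
  have [_ ex P] := step_lemma a c1 c2 (xs k) H IH.
  have [nd _ _] := P _ (xgetPex 0 ex).
  rewrite xsS; exact: nd.
pose V k := `|xs k 0 ord0| / a.
have stay k : V k < 1 -> V k.+1 < 1.
  have [_ ex P] := step_lemma a c1 c2 (xs k) H (ndk k).
  have [_ h _] := P _ (xgetPex 0 ex).
  rewrite /V xsS; exact: h.
have persist j k : V k < 1 -> V (j + k)%N < 1.
  move=> h; elim: j => [|j IH] //; rewrite addSn; exact: stay.
have desc p : forall k, 1 < V k -> V k < 2 ^+ p -> exists j, (j <= p)%N /\ V (j + k)%N < 1.
  elim: p => [|p IH] k h1 h2.
    by rewrite expr0 in h2; lra.
  have [k0 /andP[k01 k02]] := level a (xs k 0 ord0) (V k) a0 (ndk k) erefl h1.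
  have [_ ex P] := step_lemma a c1 c2 (xs k) H (ndk k).
  have [_ _ h] := P _ (xgetPex 0 ex).
  have [h3 h4] := h k0 (introT andP (conj k01 k02)).
  have e3 : V k.+1 < 2 ^+ k0 by rewrite /V xsS; exact: h3.
  have k0p : (k0 <= p)%N.
    rewrite leqNgt; apply/negP => pk.
    have : (2 : R) ^+ p.+1 <= 2 ^+ k0 by rewrite ler_eXn2l //; lra.
    lra.
  have e4 : V k.+1 < 2 ^+ p.
    apply: lt_le_trans e3 _; rewrite ler_eXn2l //; lra.
  have [vl|vg] := boolP (V k.+1 < 1).
    by exists 1%N; split => //; rewrite add1n.
  have vne : V k.+1 != 1.
    by rewrite eq_sym; apply: (ND_v a (xs k.+1 0 ord0) a0 (ndk k.+1)); exact: Dy1.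
  have vg' : 1 < V k.+1 by rewrite lt_def vne /= leNgt.
  have [j [jp hj]] := IH k.+1 vg' e4.
  by exists j.+1; split => //; rewrite addSnnS.
have V0 : V 0%N = `|tnth t ord0| / a by rewrite /V /= ex0.
have V01 : 1 < V 0%N by rewrite V0 ltr_pdivlMr // mul1r.
have l2 : 0 < ln (2 : R) by apply: ln_gt0; rewrite ltr1n.
set L := ln (`|tnth t ord0| / a) / ln 2.
have L0 : 0 < L by rewrite divr_gt0 // ln_gt0 // -V0.
pose p0 := `|Num.ceil L|%N.
have ep : (p0 : int) = Num.ceil L by rewrite gez0_abs // ceil_ge0; lra.
have V0p : V 0%N < 2 ^+ p0.
  have vpos : V 0%N \is Num.pos by rewrite posrE; lra.
  have ppos : (2 : R) ^+ p0 \is Num.pos by rewrite posrE exprn_gt0.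
  have hle : V 0%N <= 2 ^+ p0.
    rewrite -(ler_ln vpos ppos) lnXn // V0.
    have hL : L <= (p0%:R : R) by have := ceil_ge L; rewrite -ep.
    have -> : ln (`|tnth t ord0| / a) = L * ln 2 by rewrite /L divfK ?gt_eqF.
    by rewrite -(mulr_natr (ln (2:R)) p0) mulrC ler_pM2l.
  rewrite lt_def hle andbT.
  apply: (ND_v a (xs 0%N 0 ord0) a0 (ndk 0%N)); exact: Dy_pow.
have [j [jp hj]] := desc p0 0%N V01 V0p.
rewrite addn0 in hj.
exists xs; split.
  split; first reflexivity.
  move=> k; have [d ex _] := step_lemma a c1 c2 (xs k) H (ndk k).
  split; first exact: d.
  exists (tsel (xs k)); split; [exact: (xgetPex 0 ex) | reflexivity].
exists j; split.
- rewrite -ep lez_nat; exact: jp.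
- by rewrite coord1E; move: hj; rewrite /V ltr_pdivrMr // mul1r.
- move=> k jk; rewrite coord1E.
  by have := persist (k - j)%N j hj; rewrite subnK // /V ltr_pdivrMr // mul1r.
Qed.
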